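(* Assume: (A1) $f(x,y)$ and each component of $g(x,y)$ are convex in $y$ for each fixed $x$, and $f,g$ are twice continuously differentiable; (A2) $Y\subseteq\mathbb{R}^m$ is a compact convex set with $\{y:\exists x\in X \text{ such that } g(x,y)\le 0\}\subseteq\mathrm{int}(Y)$; (A3) $F$ and $G$ are twice continuously differentiable; (R1) for each $x\in X$ there exists $y$ with $g(x,y)<0$. Then for any $\overline{\epsilon}\ge0$, $\lim_{\epsilon\downarrow\overline{\epsilon},\,\mu\downarrow0}\mathcal{C}(\epsilon,\mu)=\mathcal{C}(\overline{\epsilon},0)$, and $\mathcal{C}(\epsilon_1,\mu_1)\supseteq\mathcal{C}(\epsilon_2,\mu_2)$ whenever $\epsilon_1\ge\epsilon_2\ge0$ and $\mu_1\ge\mu_2\ge0$.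
   Context: Let $F:\mathbb{R}^n\times\mathbb{R}^m\to\mathbb{R}$, $f:\mathbb{R}^n\times\mathbb{R}^m\to\mathbb{R}$, $g:\mathbb{R}^n\times\mathbb{R}^m\to\mathbb{R}^p$, $G:\mathbb{R}^n\to\mathbb{R}^q$; vector inequalities componentwise; $X=\{x:G(x)\le0\}$. For $\mu\ge0$, $h_\mu(\lambda,x)=\min_y\{\mu\|y\|^2+f(x,y)+\lambda^{\mathsf T}g(x,y):y\in Y\}$ with $Y$ from (A2), and $\mathcal{C}(\epsilon,\mu)=\{(x,y,\lambda): G(x)\le0,\ g(x,y)\le\epsilon,\ \lambda\ge0,\ f(x,y)-h_\mu(\lambda,x)\le\epsilon\}$. Set limits are in the Painlevé–Kuratowski sense (inner and outer limits coincide with the given set). *)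

(* Defs.v *)
From HB Require Import structures.
From mathcomp Require Import all_boot all_order all_algebra.
From mathcomp Require Import all_classical all_reals all_analysis.

Set Implicit Arguments.
Unset Strict Implicit.
Unset Printing Implicit Defensive.

Import Order.TTheory GRing.Theory Num.Theory.
Import numFieldNormedType.Exports.
Local Open Scope classical_set_scope.
Local Open Scope ring_scope.

(* C^1 on a finite-dimensional normed space: differentiable everywhere with
   continuous (directional) derivatives; C^2: C^1 and all directional
   derivatives are themselves C^1.  In finite dimension this is exactly
   twice continuous differentiability. *)
Definition C1 (R : realType) (V W : normedModType R) (f : V -> W) : Prop :=
  (forall x, differentiable f x) /\ (forall v : V, continuous (fun x => 'D_v f x)).

Definition C2 (R : realType) (V W : normedModType R) (f : V -> W) : Prop :=
  C1 f /\ (forall v : V, C1 (fun x => 'D_v f x)).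

Definition joint (R : realType) (n m : nat) (T : Type)
  (f : 'rV[R]_n -> 'rV[R]_m -> T) : 'rV[R]_(n + m) -> T :=
  fun z => f (lsubmx z) (rsubmx z).

Definition sqnorm (R : realType) (k : nat) (y : 'rV[R]_k) : R :=
  \sum_(i < k) y ord0 i ^+ 2.

Definition dotp (R : realType) (k : nat) (a b : 'rV[R]_k) : R :=
  \sum_(i < k) a ord0 i * b ord0 i.

Definition vle (R : realType) (k : nat) (a b : 'rV[R]_k) : Prop :=
  forall i : 'I_k, a ord0 i <= b ord0 i.

Definition Xset (R : realType) (n q : nat) (G : 'rV[R]_n -> 'rV[R]_q)
  : set 'rV[R]_n := [set x | vle (G x) 0].

(* h_mu(lambda, x) = min_{y in Y} mu ||y||^2 + f(x,y) + lambda^T g(x,y)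
   (the minimum exists under (A1)-(A2); written as the infimum) *)
Definition hmu (R : realType) (n m p : nat)
  (f : 'rV[R]_n -> 'rV[R]_m -> R) (g : 'rV[R]_n -> 'rV[R]_m -> 'rV[R]_p)
  (Y : set 'rV[R]_m) (mu : R) (lam : 'rV[R]_p) (x : 'rV[R]_n) : R :=
  inf [set mu * sqnorm y + f x y + dotp lam (g x y) | y in Y].

Definition Cset (R : realType) (n m p q : nat)
  (f : 'rV[R]_n -> 'rV[R]_m -> R) (g : 'rV[R]_n -> 'rV[R]_m -> 'rV[R]_p)
  (G : 'rV[R]_n -> 'rV[R]_q) (Y : set 'rV[R]_m) (eps mu : R)
  : set ('rV[R]_n * 'rV[R]_m * 'rV[R]_p) :=
  [set z | let: (x, y, lam) := z in
     [/\ vle (G x) 0,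
         (forall i : 'I_p, g x y ord0 i <= eps),
         vle 0 lam &
         f x y - hmu f g Y mu lam x <= eps]].

(* Painleve-Kuratowski limits of a set-valued map S(eps, mu) as
   eps decreases to ebar (eps > ebar) and mu decreases to 0 (mu > 0). *)
Definition adm_seq (R : realType) (ebar : R) (e u : nat -> R) : Prop :=
  [/\ (forall k, ebar < e k), (forall k, 0 < u k),
      e @ \oo --> ebar & u @ \oo --> (0 : R)].

Definition PK_outer (R : realType) (T : topologicalType) (ebar : R)
  (S : R -> R -> set T) : set T :=
  [set z | exists (e u : nat -> R) (zs : nat -> T),
     [/\ adm_seq ebar e u, (forall k, S (e k) (u k) (zs k)) & zs @ \oo --> z]].

Definition PK_inner (R : realType) (T : topologicalType) (ebar : R)
  (S : R -> R -> set T) : set T :=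
  [set z | forall (e u : nat -> R), adm_seq ebar e u ->
     exists zs : nat -> T,
       (\forall k \near \oo, S (e k) (u k) (zs k)) /\ zs @ \oo --> z].

(* Main.v *)
Require Import Defs.
From HB Require Import structures.
From mathcomp Require Import all_boot all_order all_algebra.
From mathcomp Require Import all_classical all_reals all_analysis.
Import Order.TTheory GRing.Theory Num.Theory.
Import numFieldNormedType.Exports.
Local Open Scope classical_set_scope.
Local Open Scope ring_scope.

Section Aux.
Variable R : realType.

Lemma row_cvg (T : Type) (F : set_system T) {FF : Filter F} a b
  (xs : T -> 'rV[R]_a) (ys : T -> 'rV[R]_b) (x : 'rV[R]_a) (y : 'rV[R]_b) :
  xs @ F --> x -> ys @ F --> y ->
  (fun t => row_mx (xs t) (ys t)) @ F --> row_mx x y.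
Proof.
move=> cx cy A /nbhs_ballP [e e0 eA].
have Hx : F [set t | ball x e (xs t)] := cx _ (nbhsx_ballx x e e0).
have Hy : F [set t | ball y e (ys t)] := cy _ (nbhsx_ballx y e e0).
change (F [set t | A (row_mx (xs t) (ys t))]).
move: Hx Hy; apply: filterS2 => t /= [_ bx] [_ bY]; apply: eA; split => // i j.
by case: (split_ordP j) => k ->; rewrite ?row_mxEl ?row_mxEr; [exact: bx|exact: bY].
Qed.

Lemma coord_cvg (T : Type) (F : set_system T) {FF : Filter F} a b
  (M_ : T -> 'M[R]_(a, b)) (M : 'M[R]_(a, b)) i j :
  M_ @ F --> M -> (fun t => M_ t i j) @ F --> M i j.
Proof. move=> cM; exact: (continuous_cvg _ (@coord_continuous R _ _ i j M) cM). Qed.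

Lemma dotp_cvg (T : Type) (F : set_system T) {FF : Filter F} k
  (a_ b_ : T -> 'rV[R]_k) (a b : 'rV[R]_k) :
  a_ @ F --> a -> b_ @ F --> b -> (fun t => dotp (a_ t) (b_ t)) @ F --> dotp a b.
Proof.
move=> ca cb; rewrite /dotp; apply: cvg_big => //.
  exact: add_continuous.
move=> i _; apply: cvgM; exact: coord_cvg.
Qed.

Lemma sqnorm_dotp k (y : 'rV[R]_k) : sqnorm y = dotp y y.
Proof. by rewrite /sqnorm /dotp; apply: eq_bigr => i _; rewrite expr2. Qed.

Lemma joint_cvg (T : Type) (F : set_system T) {FF : Filter F} a b
  (W : normedModType R) (h : 'rV[R]_a -> 'rV[R]_b -> W)
  (xs : T -> 'rV[R]_a) (ys : T -> 'rV[R]_b) (x : 'rV[R]_a) (y : 'rV[R]_b) :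
  continuous (joint h) ->
  xs @ F --> x -> ys @ F --> y -> (fun t => h (xs t) (ys t)) @ F --> h x y.
Proof.
move=> hc cx cy.
have -> : (fun t => h (xs t) (ys t)) = joint h \o (fun t => row_mx (xs t) (ys t)).
  by apply: funext => t; rewrite /joint /= row_mxKl row_mxKr.
have -> : h x y = joint h (row_mx x y) by rewrite /joint row_mxKl row_mxKr.
apply: continuous_cvg; [exact: hc | exact: row_cvg].
Qed.


Lemma pr1_cvg n m p (zs : nat -> 'rV[R]_n * 'rV[R]_m * 'rV[R]_p) (x : 'rV[R]_n) (y : 'rV[R]_m) (lam : 'rV[R]_p) :
  zs @ \oo --> (x, y, lam) -> (fun k => (zs k).1.1) @ \oo --> x.
Proof.
move=> cz.
have h : (fun z : 'rV[R]_n * 'rV[R]_m * 'rV[R]_p => z.1.1) @ (x, y, lam) --> x.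
  apply: cvg_comp; exact: cvg_fst.
exact: (cvg_comp _ _ cz h).
Qed.
Lemma pr2_cvg n m p (zs : nat -> 'rV[R]_n * 'rV[R]_m * 'rV[R]_p) (x : 'rV[R]_n) (y : 'rV[R]_m) (lam : 'rV[R]_p) :
  zs @ \oo --> (x, y, lam) -> (fun k => (zs k).1.2) @ \oo --> y.
Proof.
move=> cz.
have h : (fun z : 'rV[R]_n * 'rV[R]_m * 'rV[R]_p => z.1.2) @ (x, y, lam) --> y.
  apply: cvg_comp; [exact: cvg_fst | exact: cvg_snd].
exact: (cvg_comp _ _ cz h).
Qed.
Lemma pr3_cvg n m p (zs : nat -> 'rV[R]_n * 'rV[R]_m * 'rV[R]_p) (x : 'rV[R]_n) (y : 'rV[R]_m) (lam : 'rV[R]_p) :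
  zs @ \oo --> (x, y, lam) -> (fun k => (zs k).2) @ \oo --> lam.
Proof.
move=> cz.
have h : (fun z : 'rV[R]_n * 'rV[R]_m * 'rV[R]_p => z.2) @ (x, y, lam) --> lam.
  exact: cvg_snd.
exact: (cvg_comp _ _ cz h).
Qed.

End Aux.
From mathcomp Require Import lra.
Section Main.
Variables (R : realType) (n m p q : nat) (f : 'rV[R]_n -> 'rV[R]_m -> R)
  (g : 'rV[R]_n -> 'rV[R]_m -> 'rV[R]_p) (G : 'rV[R]_n -> 'rV[R]_q)
  (Y : set 'rV[R]_m).
Hypotheses (fc : continuous (joint f)) (gc : continuous (joint g))
  (Gc : continuous G) (Yc : compact Y).

Definition phi (mu : R) (lam : 'rV[R]_p) (x : 'rV[R]_n) (y : 'rV[R]_m) : R :=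
  mu * sqnorm y + f x y + dotp lam (g x y).

Lemma phi_cvg (T : Type) (F : set_system T) {FF : Filter F}
  (mus : T -> R) (lams : T -> 'rV[R]_p) (xs : T -> 'rV[R]_n) (ys : T -> 'rV[R]_m)
  (mu : R) (lam : 'rV[R]_p) (x : 'rV[R]_n) (y : 'rV[R]_m) :
  mus @ F --> mu -> lams @ F --> lam -> xs @ F --> x -> ys @ F --> y ->
  (fun t => phi (mus t) (lams t) (xs t) (ys t)) @ F --> phi mu lam x y.
Proof.
move=> cmu cl cx cy.
have h1 : (fun t => sqnorm (ys t)) @ F --> sqnorm y.
  have -> : (fun t => sqnorm (ys t)) = (fun t => dotp (ys t) (ys t)).
    by apply: funext => t; rewrite sqnorm_dotp.
  rewrite sqnorm_dotp; exact: dotp_cvg.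
have h2 : (fun t => mus t * sqnorm (ys t)) @ F --> mu * sqnorm y by exact: cvgM.
have h3 : (fun t => f (xs t) (ys t)) @ F --> f x y by exact: joint_cvg.
have h4 : (fun t => dotp (lams t) (g (xs t) (ys t))) @ F --> dotp lam (g x y).
  apply: dotp_cvg => //; exact: joint_cvg.
exact: (cvgD (cvgD h2 h3) h4).
Qed.

Lemma phi_cont mu lam x : continuous (phi mu lam x).
Proof.
move=> y0.
have := @phi_cvg _ (nbhs y0) _ (fun=> mu) (fun=> lam) (fun=> x) id mu lam x y0
  (cvg_cst _) (cvg_cst _) (cvg_cst _) cvg_id.
exact.
Qed.

Lemma phi_lb mu lam x : has_lbound [set phi mu lam x y | y in Y].
Proof.
have := compact_bounded (continuous_compact (continuous_subspaceT (phi_cont mu lam x)) Yc).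
case=> M [Mr HM].
have := HM (M + 1); rewrite ltrDl ltr01 => /(_ isT) HM1.
exists (- (M + 1)) => z Sz.
have := HM1 z Sz; rewrite /= ler_norml => /andP[] //.
Qed.

Lemma hmu_mono mu1 mu2 lam x : 0 <= mu2 -> mu2 <= mu1 ->
  hmu f g Y mu2 lam x <= hmu f g Y mu1 lam x.
Proof.
move=> mu20 mu21; rewrite /hmu.
have [[y0 Yy0]|Y0] := pselect (Y !=set0); last first.
  have -> : Y = set0 by apply/seteqP; split => // y Yy; apply: Y0; exists y.
  by rewrite !image_set0.
apply: lb_le_inf; first by exists (phi mu1 lam x y0), y0.
move=> _ [y Yy <-].
apply: le_trans (ge_inf (phi_lb mu2 lam x) (ex_intro2 _ _ y Yy erefl)) _.
rewrite /phi lerD2r lerD2r ler_wpM2r //.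
by rewrite /sqnorm; apply: sumr_ge0 => i _; exact: sqr_ge0.
Qed.

Lemma Cmono eps1 eps2 mu1 mu2 : eps2 <= eps1 -> 0 <= mu2 -> mu2 <= mu1 ->
  Cset f g G Y eps2 mu2 `<=` Cset f g G Y eps1 mu1.
Proof.
move=> e21 mu20 mu21 [[x y] lam] /= [H1 H2 H3 H4]; split => //.
  by move=> i; exact: le_trans (H2 i) e21.
have := hmu_mono _ _ lam x mu20 mu21; lra.
Qed.

Lemma CL (ebar : R) (e u : nat -> R) (zs : nat -> 'rV[R]_n * 'rV[R]_m * 'rV[R]_p)
  (x : 'rV[R]_n) (y : 'rV[R]_m) (lam : 'rV[R]_p) :
  e @ \oo --> ebar -> u @ \oo --> (0 : R) ->
  (\forall k \near \oo, Cset f g G Y (e k) (u k) (zs k)) ->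
  zs @ \oo --> (x, y, lam) -> Cset f g G Y ebar 0 (x, y, lam).
Proof.
move=> ce cu HC cz.
pose xs := fun k => (zs k).1.1; pose ys := fun k => (zs k).1.2;
pose ls := fun k => (zs k).2.
have cx : xs @ \oo --> x by exact: (@pr1_cvg R _ _ _ zs x y lam cz).
have cy : ys @ \oo --> y by exact: (@pr2_cvg R _ _ _ zs x y lam cz).
have cl : ls @ \oo --> lam by exact: (@pr3_cvg R _ _ _ zs x y lam cz).
have H : \forall k \near \oo, [/\ vle (G (xs k)) 0,
    forall i, g (xs k) (ys k) ord0 i <= e k, vle 0 (ls k) &
    f (xs k) (ys k) - hmu f g Y (u k) (ls k) (xs k) <= e k].
  by move: HC; apply: filterS => k; rewrite /xs /ys /ls; case: (zs k) => [[a b] c].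
have hf : (fun k => f (xs k) (ys k)) @ \oo --> f x y by exact: joint_cvg.
have hg : (fun k => g (xs k) (ys k)) @ \oo --> g x y by exact: joint_cvg.
have hG : (fun k => G (xs k)) @ \oo --> G x.
  by apply: continuous_cvg => //; exact: Gc.
split.
- move=> i; rewrite mxE.
  have hGi : (fun k => G (xs k) ord0 i) @ \oo --> G x ord0 i by exact: coord_cvg.
  apply: (cvgr_to_le hGi).
  by move: H; apply: filterS => k [+ _ _ _] => /(_ i); rewrite mxE.
- move=> i; rewrite -subr_le0.
  have hgi : (fun k => g (xs k) (ys k) ord0 i) @ \oo --> g x y ord0 i by exact: coord_cvg.
  have hgi' : (fun k => g (xs k) (ys k) ord0 i - e k) @ \oo --> g x y ord0 i - ebar.
    exact: cvgB.
  apply: (cvgr_to_le hgi').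
  by move: H; apply: filterS => k [_ + _ _] => /(_ i); rewrite subr_le0.
- move=> i; rewrite mxE.
  have hli : (fun k => ls k ord0 i) @ \oo --> lam ord0 i by exact: coord_cvg.
  apply: (cvgr_to_ge hli).
  by move: H; apply: filterS => k [_ _ + _] => /(_ i); rewrite mxE.
have [[y0 Yy0]|Y0] := pselect (Y !=set0); last first.
  have Ye : Y = set0 by apply/seteqP; split => // y' Yy'; apply: Y0; exists y'.
  move: H; rewrite /hmu Ye !image_set0 => H.
  rewrite -subr_le0.
  have hc : (fun k => f (xs k) (ys k) - inf set0 - e k) @ \oo --> f x y - inf set0 - ebar.
    by apply: cvgB => //; apply: cvgB => //; exact: cvg_cst.
  apply: (cvgr_to_le hc).
  by move: H; apply: filterS => k [_ _ _ +]; rewrite image_set0 subr_le0.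
suff Hs : f x y - ebar <= hmu f g Y 0 lam x by lra.
apply: lb_le_inf; first by exists (phi 0 lam x y0), y0.
move=> _ [y' Yy' <-].
have Hl : f x y - ebar - phi 0 lam x y' <= 0.
  have hp : (fun k => phi (u k) (ls k) (xs k) y') @ \oo --> phi 0 lam x y'.
    by apply: phi_cvg => //; exact: cvg_cst.
  have hc : (fun k => f (xs k) (ys k) - e k - phi (u k) (ls k) (xs k) y') @ \oo
      --> f x y - ebar - phi 0 lam x y'.
    by apply: cvgB => //; apply: cvgB.
  apply: (cvgr_to_le hc).
  move: H; apply: filterS => k [_ _ _ Hk].
  have := ge_inf (phi_lb (u k) (ls k) (xs k)) (ex_intro2 _ _ y' Yy' erefl).
  rewrite /hmu in Hk; rewrite /phi in Hk *; lra.
by rewrite /phi in Hl *; lra.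
Qed.

End Main.

Lemma adm_exists (R : realType) (ebar : R) :
  adm_seq ebar (fun k => ebar + harmonic k) (fun k => harmonic k).
Proof.
split.
- by move=> k; rewrite ltrDl harmonic_gt0.
- by move=> k; exact: harmonic_gt0.
- rewrite -[X in _ --> X]addr0; apply: cvgD; [exact: cvg_cst | exact: cvg_harmonic].
- exact: cvg_harmonic.
Qed.

Theorem proposition6 (R : realType) (n m p q : nat)
  (F : 'rV[R]_n -> 'rV[R]_m -> R) (f : 'rV[R]_n -> 'rV[R]_m -> R)
  (g : 'rV[R]_n -> 'rV[R]_m -> 'rV[R]_p) (G : 'rV[R]_n -> 'rV[R]_q)
  (Y : set 'rV[R]_m) :
  (* (A1) *)
  (forall x, convex_function setT (f x)) ->
  (forall x (i : 'I_p), convex_function setT (fun y => g x y ord0 i)) ->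
  C2 (joint f) -> C2 (joint g) ->
  (* (A2) *)
  compact Y -> convex_set Y ->
  [set y | exists2 x, Xset G x & vle (g x y) 0] `<=` interior Y ->
  (* (A3) *)
  C2 (joint F) -> C2 G ->
  (* (R1) *)
  (forall x, Xset G x -> exists y, forall i : 'I_p, g x y ord0 i < 0) ->
  (forall ebar : R, 0 <= ebar ->
     PK_inner ebar (Cset f g G Y) = Cset f g G Y ebar 0 /\
     PK_outer ebar (Cset f g G Y) = Cset f g G Y ebar 0) /\
  (forall eps1 eps2 mu1 mu2 : R, eps2 <= eps1 -> 0 <= eps2 ->
     mu2 <= mu1 -> 0 <= mu2 ->
     Cset f g G Y eps2 mu2 `<=` Cset f g G Y eps1 mu1).
Proof.
move=> _ _ Cf Cg Yc _ _ _ CG _.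
have fc : continuous (joint f) := fun z => differentiable_continuous (Cf.1.1 z).
have gc : continuous (joint g) := fun z => differentiable_continuous (Cg.1.1 z).
have Gc : continuous G := fun z => differentiable_continuous (CG.1.1 z).
split; last first.
  move=> eps1 eps2 mu1 mu2 e21 _ m21 m20; exact: (@Cmono R n m p q f g G Y fc gc Yc).
move=> ebar ebar0.
have inner_sup : Cset f g G Y ebar 0 `<=` PK_inner ebar (Cset f g G Y).
  move=> z Cz e u [he hu ce cu]; exists (fun=> z); split; last exact: cvg_cst.
  apply: filterE => k; apply: (@Cmono R n m p q f g G Y fc gc Yc _ _ _ _ _ _ _ z Cz) => //.
  - exact: ltW.
  - exact: ltW.
have outer_sup : Cset f g G Y ebar 0 `<=` PK_outer ebar (Cset f g G Y).
  move=> z Cz; exists (fun k => ebar + harmonic k), (fun k => harmonic k), (fun=> z).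
  split; [exact: adm_exists | | exact: cvg_cst].
  move=> k; apply: (@Cmono R n m p q f g G Y fc gc Yc _ _ _ _ _ _ _ z Cz) => //.
  - by rewrite lerDl harmonic_ge0.
  - exact: harmonic_ge0.
have outer_sub : PK_outer ebar (Cset f g G Y) `<=` Cset f g G Y ebar 0.
  move=> [[x y] lam] [e [u [zs [[he hu ce cu] HC cz]]]].
  apply: (@CL R n m p q f g G Y fc gc Gc Yc _ _ _ _ _ _ _ ce cu _ cz); exact: filterE.
have inner_sub : PK_inner ebar (Cset f g G Y) `<=` Cset f g G Y ebar 0.
  move=> [[x y] lam] Hz.
  have [zs [HC cz]] := Hz _ _ (adm_exists _ ebar).
  have [_ _ ce cu] := adm_exists _ ebar.
  exact: (@CL R n m p q f g G Y fc gc Gc Yc _ _ _ _ _ _ _ ce cu HC cz).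
by split; apply/seteqP; split.
Qed.
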